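(* Let $\mathcal{X}$ be a finite set, $\phi\notin\mathcal{X}$ an extra symbol, and $L,T\in\mathbb{N}$. Fix a permutation of $\{0,\dots,L-1\}$ and let $i_0,\dots,i_{T-1}\in\{0,\dots,L-1\}$ be the positions obtained by cycling through this permutation in round-robin fashion. For $t=0,\dots,T-1$ let $\Pi_t$ be a probability distribution on $\mathcal{X}\cup\{\phi\}$. Let $X_0$ be a random element of $\mathcal{X}^L$ with an arbitrary distribution $P^*$, and let $Z_0,\dots,Z_{T-1}$ be independent random variables, independent of $X_0$, with $Z_t\sim\Pi_t$. Define the forward process $X_0,X_1,\dots,X_T$ by: $X_{t+1,j}=X_{t,j}$ for $j\neq i_t$; $X_{t+1,i_t}=X_{t,i_t}$ if $Z_t=\phi$; and $X_{t+1,i_t}=Z_t$ if $Z_t\in\mathcal{X}$. Suppose that the conditional distribution $\Pi_t(\cdot\mid\mathcal{X})$ equals a fixed distribution $\Pi(\cdot\mid\mathcal{X})$ on $\mathcal{X}$ for every $t$, and that there is $\epsilon>0$ with $\Pi_t(\phi)\le 1-\epsilon$ for all $t$. Then $$\mathsf{TV}\big(\mathsf{Law}(X_T),\,\Pi(\cdot\mid\mathcal{X})^{\otimes L}\big)\le L(1-\epsilon)^{\lfloor T/L\rfloor},$$ and in particular $\mathsf{Law}(X_T)$ converges to $\Pi(\cdot\mid\mathcal{X})^{\otimes L}$ in total variation as $T\to\infty$.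
   Context: $\mathsf{TV}$ denotes total variation distance. For a distribution $Q$ on a finite set $\mathcal{Y}$ and $A\subseteq\mathcal{Y}$ with $Q(A)>0$, $Q(\cdot\mid A)$ denotes the conditional distribution of $Q$ on $A$. $X_{t,j}$ denotes the $j$-th coordinate of $X_t\in\mathcal{X}^L$, coordinates indexed by $\{0,\dots,L-1\}$. *)

(* Defs.v *)
From HB Require Import structures.
From mathcomp Require Import all_boot all_order all_algebra all_fingroup.
From mathcomp Require Import all_classical all_reals topology normedtype sequences.
Set Implicit Arguments. Unset Strict Implicit. Unset Printing Implicit Defensive.
Import Order.TTheory GRing.Theory Num.Theory.
Local Open Scope ring_scope.

Section Defs.
Variable R : realType.

Definition is_dist (A : finType) (p : {ffun A -> R}) : Prop :=
  (forall a, 0 <= p a) /\ \sum_a p a = 1.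

Definition TV (A : finType) (p q : {ffun A -> R}) : R :=
  2^-1 * \sum_a `|p a - q a|.

Variable X : finType.
(* X ∪ {phi} is modelled by option X, with phi = None *)

Definition cond_on_X (p : {ffun option X -> R}) : {ffun X -> R} :=
  [ffun a => p (Some a) / \sum_b p (Some b)].

Variable L : nat.

Definition step (i : 'I_L) (z : option X) (x : {ffun 'I_L -> X}) : {ffun 'I_L -> X} :=
  match z with
  | None => x
  | Some a => [ffun j => if j == i then a else x j]
  end.

Fixpoint run (i : nat -> 'I_L) (z : nat -> option X) (x0 : {ffun 'I_L -> X}) (n : nat)
  : {ffun 'I_L -> X} :=
  match n with
  | 0 => x0
  | n.+1 => step (i n) (z n) (run i z x0 n)
  end.

Definition zext (T : nat) (z : {ffun 'I_T -> option X}) (t : nat) : option X :=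
  if (insub t : option 'I_T) is Some k then z k else None.

Definition lawXT (i : nat -> 'I_L) (Pstar : {ffun {ffun 'I_L -> X} -> R})
  (Pi : nat -> {ffun option X -> R}) (T : nat) : {ffun {ffun 'I_L -> X} -> R} :=
  [ffun x => \sum_(x0 : {ffun 'I_L -> X}) Pstar x0 *
     \sum_(z : {ffun 'I_T -> option X})
        (\prod_(t : 'I_T) Pi t (z t)) * (run i (zext z) x0 T == x)%:R].

Definition prod_dist (Q : {ffun X -> R}) : {ffun {ffun 'I_L -> X} -> R} :=
  [ffun x : {ffun 'I_L -> X} => \prod_(j : 'I_L) Q (x j)].

End Defs.

(* Main.v *)
Require Import Defs.
From HB Require Import structures.
From mathcomp Require Import all_boot all_order all_algebra all_fingroup.
From mathcomp Require Import all_classical all_reals topology normedtype sequences.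
From mathcomp Require Import ring lra.
Import Order.TTheory GRing.Theory Num.Theory numFieldNormedType.Exports.
Set Implicit Arguments. Unset Strict Implicit. Unset Printing Implicit Defensive.
Local Open Scope ring_scope.

Section S.
Variable R : realType.

Lemma eq_ffun_prod (I A : finType) (f g : {ffun I -> A}) :
  ((f == g)%:R : R) = \prod_j ((f j == g j)%:R : R).
Proof.
have [->|neq] := eqVneq f g.
  by rewrite big1 // => j _; rewrite eqxx.
have [j Hj] : exists j, f j != g j.
  apply/existsP; apply: contraR neq => /existsPn H; apply/eqP/ffunP => j.
  by move: (H j); rewrite negbK => /eqP.
by rewrite (bigD1 j) //= (negbTE Hj) mul0r.
Qed.

Definition extf (A : Type) n (z : {ffun 'I_n -> A}) (a : A) : {ffun 'I_n.+1 -> A} :=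
  [ffun k : 'I_n.+1 => if (insub (val k) : option 'I_n) is Some k' then z k' else a].

Lemma sum_ffunS (A : finType) n (F : {ffun 'I_n.+1 -> A} -> R) :
  \sum_z F z = \sum_(z : {ffun 'I_n -> A}) \sum_(a : A) F (extf z a).
Proof.
rewrite pair_big /=.
rewrite (reindex (fun p : {ffun 'I_n -> A} * A => extf p.1 p.2)) //=.
exists (fun z : {ffun 'I_n.+1 -> A} => ([ffun k : 'I_n => z (widen_ord (leqnSn n) k)], z ord_max)).
- move=> [zz a] _ /=; congr pair.
  + apply/ffunP => k; rewrite !ffunE /=.
    case: insubP => [k' Hk Ek | ]; last by rewrite /= ltn_ord.
    by congr (zz _); apply: val_inj.
  + rewrite ffunE; case: insubP => //= [k' ]; by rewrite ltnn.
- move=> z _ /=; apply/ffunP => k; rewrite !ffunE /=.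
  case: insubP => [k' Hk Ek | Hk]; rewrite ?ffunE.
    by congr (z _); apply: val_inj => /=; rewrite Ek.
  congr (z _); apply: val_inj => /=.
  by have := ltn_ord k; rewrite ltnS leq_eqVlt (negbTE Hk) orbF => /eqP.
Qed.

Lemma sum_option (A : finType) (F : option A -> R) :
  \sum_o F o = F None + \sum_a F (Some a).
Proof.
rewrite (bigD1 None) //=; congr (_ + _).
rewrite (reindex_omap Some id) => [|[a|] //].
by apply: eq_bigl => a /=; rewrite eqxx.
Qed.

Lemma sum_ind (A : finType) (r : A) (F : A -> R) :
  \sum_y (r == y)%:R * F y = F r.
Proof.
rewrite (bigD1 r) //= eqxx mul1r big1 ?addr0 // => y.
by rewrite eq_sym => /negbTE ->; rewrite mul0r.
Qed.

Variables (X : finType) (L : nat).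

Lemma run_ext (i : nat -> 'I_L) z1 z2 (x0 : {ffun 'I_L -> X}) n :
  (forall t, (t < n)%N -> z1 t = z2 t) -> run i z1 x0 n = run i z2 x0 n.
Proof.
elim: n => //= n IH H; rewrite H // IH // => t Ht; apply: H; exact: ltnW.
Qed.

Lemma zext_extf T (z : {ffun 'I_T -> option X}) a t :
  (t < T)%N -> zext (extf z a) t = zext z t.
Proof.
move=> Ht; rewrite /zext.
case: insubP => [k Hk Ek|]; last by rewrite ltnW.
case: insubP => [k' Hk' Ek'|]; last by rewrite Ht.
rewrite ffunE; case: insubP => [k'' _ E''|]; last by rewrite Ek Ht.
by congr (z _); apply: val_inj; rewrite E'' Ek Ek'.
Qed.

Lemma zext_extf_last T (z : {ffun 'I_T -> option X}) a :
  zext (extf z a) T = a.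
Proof.
rewrite /zext; case: insubP => [k Hk Ek|]; last by rewrite ltnSn.
by rewrite ffunE Ek; case: insubP => // k'; rewrite ltnn.
Qed.

Lemma zext_val T (z : {ffun 'I_T -> option X}) (k : 'I_T) : zext z k = z k.
Proof. by rewrite /zext valK. Qed.

Lemma lawXT_S i (P : {ffun {ffun 'I_L -> X} -> R}) Pi T x :
  lawXT i P Pi T.+1 x =
  \sum_y lawXT i P Pi T y * \sum_a Pi T a * (step (i T) a y == x)%:R.
Proof.
transitivity (\sum_x0 P x0 * \sum_(z : {ffun 'I_T -> option X}) \sum_a
   ((\prod_(t : 'I_T) Pi t (z t)) * Pi T a) *
      (step (i T) a (run i (zext z) x0 T) == x)%:R).
  rewrite ffunE; apply: eq_bigr => x0 _; congr (_ * _).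
  rewrite sum_ffunS; apply: eq_bigr => z _; apply: eq_bigr => a _.
  rewrite big_ord_recr /= zext_extf_last.
  have -> : run i (zext (extf z a)) x0 T = run i (zext z) x0 T.
    by apply: run_ext => t Ht; rewrite zext_extf.
  congr (_ * _ * _); last first.
    by rewrite ffunE; case: insubP => // k; rewrite ltnn.
  apply: eq_bigr => t _; rewrite ffunE; case: insubP => [k _ Ek|]; last by rewrite /= ltn_ord.
  by congr (Pi _ (z _)); apply: val_inj.
symmetry.
under eq_bigr do rewrite ffunE big_distrl /=.
rewrite exchange_big /=; apply: eq_bigr => x0 _.
under eq_bigr do rewrite -mulrA.
rewrite -big_distrr /=; congr (_ * _).
under eq_bigr do rewrite big_distrl /=.
rewrite exchange_big; apply: eq_bigr => z _ /=.
under eq_bigr do rewrite -mulrA.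
rewrite -big_distrr sum_ind big_distrr; apply: eq_bigr => a _.
by rewrite /= mulrA.
Qed.


Lemma prod_dist_sum (Q : {ffun X -> R}) : is_dist Q -> \sum_x prod_dist L Q x = 1.
Proof.
move=> [_ Q1]; under eq_bigr do rewrite ffunE.
rewrite -(bigA_distr_bigA (fun _ c => Q c)) /=.
by rewrite big1 // => j _; rewrite Q1.
Qed.

Lemma kernel_stat (k : 'I_L) (p : {ffun option X -> R}) (Q : {ffun X -> R}) :
  is_dist p -> cond_on_X p = Q -> is_dist Q -> forall x,
  \sum_y prod_dist L Q y * \sum_a p a * (step k a y == x)%:R = prod_dist L Q x.
Proof.
move=> [p0 p1] hc [Q0 Q1] x.
set S := \sum_b p (Some b).
have pS : forall b, p (Some b) = Q b * S.
  have S0 : S != 0.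
    apply/eqP => S0; move: Q1; rewrite -hc.
    under eq_bigr do rewrite ffunE -/S S0 invr0 mulr0.
    by rewrite big1 // => /eqP; rewrite eq_sym oner_eq0.
  by move=> b; rewrite -hc ffunE -/S divfK.
have pN : p None = 1 - S by rewrite -p1 sum_option addrK.
set C := \prod_(j | j != k) Q (x j).
have px : prod_dist L Q x = Q (x k) * C by rewrite ffunE (bigD1 k).
have H2 : forall b, \sum_y prod_dist L Q y *
    ([ffun j => if j == k then b else y j] == x)%:R = (b == x k)%:R * C.
  move=> b.
  transitivity (\sum_(y : {ffun 'I_L -> X}) \prod_j (Q (y j) * ((if j == k then b else y j) == x j)%:R)).
    apply: eq_bigr => y _; rewrite eq_ffun_prod ffunE -big_split /=.
    by apply: eq_bigr => j _; rewrite ffunE.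
  rewrite -(bigA_distr_bigA (fun j c => Q c * ((if j == k then b else c) == x j)%:R)).
  rewrite (bigD1 k) //= eqxx; congr (_ * _).
    by under eq_bigr do rewrite mulrC; rewrite -big_distrr /= Q1 mulr1.
  apply: eq_bigr => j /negbTE ->.
  by under eq_bigr do rewrite mulrC eq_sym; rewrite sum_ind.
under eq_bigr do rewrite big_distrr /=.
rewrite exchange_big /= sum_option.
under eq_bigr do rewrite mulrCA.
rewrite -big_distrr /=.
under [X in _ + X]eq_bigr => b _.
  under eq_bigr do rewrite mulrCA.
  rewrite -big_distrr /= H2 mulrCA.
  over.
rewrite /= (eq_bigr (fun b => (x k == b)%:R * (p (Some b) * C))); last first.
  by move=> b _; rewrite eq_sym.
rewrite sum_ind.
under eq_bigr do rewrite mulrC eq_sym.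
rewrite sum_ind pN pS px; ring.
Qed.


Lemma sum_ffun0 (A : finType) (F : {ffun 'I_0 -> A} -> R) z0 : \sum_z F z = F z0.
Proof. by rewrite (big_pred1 z0) // => z; symmetry; apply/eqP/ffunP => -[]. Qed.

Lemma lawXT0 i (P : {ffun {ffun 'I_L -> X} -> R}) Pi : lawXT i P Pi 0 = P.
Proof.
apply/ffunP => x; rewrite ffunE.
under eq_bigr => x0 _ do rewrite (sum_ffun0 _ [ffun t => None]) big_ord0 mul1r /= mulrC.
by under eq_bigr do rewrite eq_sym; rewrite sum_ind.
Qed.

Lemma stationary i Pi (Q : {ffun X -> R}) T : is_dist Q ->
  (forall t, (t < T)%N -> is_dist (Pi t) /\ cond_on_X (Pi t) = Q) ->
  lawXT i (prod_dist L Q) Pi T = prod_dist L Q.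
Proof.
move=> hQ; elim: T => [|T IH] H; first exact: lawXT0.
apply/ffunP => x; rewrite lawXT_S IH; last by move=> t Ht; apply: H; exact: ltnW.
by have [h1 h2] := H T (ltnSn T); rewrite kernel_stat.
Qed.


Lemma ffun_neq (I A : finType) (f g : {ffun I -> A}) : f != g -> exists j, f j != g j.
Proof.
move=> neq; apply/existsP; apply: contraR neq => /existsPn H; apply/eqP/ffunP => j.
by move: (H j); rewrite negbK => /eqP.
Qed.

Lemma sum_pair (I J : finType) (F : I * J -> R) : \sum_k F k = \sum_i \sum_j F (i, j).
Proof. by rewrite pair_big; apply: eq_bigr => -[]. Qed.

Lemma sum_abs_ind (A : finType) (r1 r2 : A) :
  \sum_x `|(r1 == x)%:R - (r2 == x)%:R : R| = 2 * (r1 != r2)%:R.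
Proof.
have [->|ne] := eqVneq r1 r2.
  by rewrite big1 ?mulr0 // => x _; rewrite subrr normr0.
rewrite mulr1 (eq_bigr (fun x => (r1 == x)%:R * 1 + (r2 == x)%:R * 1)).
  by rewrite big_split /= !sum_ind.
move=> x _; rewrite !mulr1.
have [<-|n1] := eqVneq r1 x.
  by rewrite eq_sym (negbTE ne) subr0 addr0 normr1.
by case: (r2 == x); rewrite /= ?sub0r ?subr0 ?normrN ?normr1 ?normr0 ?add0r ?addr0.
Qed.

Lemma tv_mix (I A : finType) (c : I -> R) (r1 r2 : I -> A) (mu nu : {ffun A -> R}) :
  (forall k, 0 <= c k) ->
  (forall x, mu x - nu x = \sum_k c k * ((r1 k == x)%:R - (r2 k == x)%:R)) ->
  TV mu nu <= \sum_k c k * (r1 k != r2 k)%:R.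
Proof.
move=> c0 H; rewrite /TV.
have -> : \sum_k c k * (r1 k != r2 k)%:R =
   2^-1 * \sum_k c k * \sum_x `|(r1 k == x)%:R - (r2 k == x)%:R : R|.
  rewrite big_distrr; apply: eq_bigr => k _; rewrite sum_abs_ind.
  by rewrite /= [in RHS]mulrCA [2^-1 * _]mulrA mulVf ?mul1r // pnatr_eq0.
rewrite ler_wpM2l // ?invr_ge0 ?ler0n //.
under [X in _ <= X]eq_bigr do rewrite big_distrr /=.
rewrite exchange_big /=; apply: ler_sum => x _.
rewrite H; apply: le_trans (ler_norm_sum _ _ _) _.
by apply: ler_sum => k _; rewrite normrM ger0_norm.
Qed.

Lemma run_diff i zz (x0 y0 : {ffun 'I_L -> X}) n j :
  run i zz x0 n j != run i zz y0 n j ->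
  forall t, (t < n)%N -> i t = j -> zz t = None.
Proof.
elim: n => [|n IH] //= Hd t Ht Hi.
case E: (zz n) Hd => [a|] /= Hd.
  rewrite !ffunE in Hd; move: Hd.
  case: (eqVneq j (i n)) => [Ej|Hj]; first by rewrite /= eqxx.
  rewrite ?(negbTE Hj) => Hd.
  move: Ht; rewrite ltnS leq_eqVlt => /orP[/eqP Et|Ht].
    by subst t; rewrite Hi eqxx in Hj.
  exact: IH Hd t Ht Hi.
move: Ht; rewrite ltnS leq_eqVlt => /orP[/eqP Et|Ht]; first by subst t.
exact: IH Hd t Ht Hi.
Qed.

Definition Nj (i : nat -> 'I_L) T (j : 'I_L) (z : {ffun 'I_T -> option X}) : R :=
  \prod_(t : 'I_T) (if i t == j then (z t == None)%:R else 1).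

Lemma Nj_ge0 i T j (z : {ffun 'I_T -> option X}) : 0 <= Nj i j z.
Proof. by apply: prodr_ge0 => t _; case: ifP. Qed.

Lemma ind_neq_le i T (z : {ffun 'I_T -> option X}) (x0 y0 : {ffun 'I_L -> X}) :
  ((run i (zext z) x0 T != run i (zext z) y0 T)%:R : R) <= \sum_j Nj i j z.
Proof.
have [_|ne] := eqVneq (run i (zext z) x0 T) (run i (zext z) y0 T).
  by rewrite sumr_ge0 // => j _; apply: Nj_ge0.
have [j Hj] := ffun_neq ne.
rewrite (bigD1 j) //=.
have -> : Nj i j z = 1.
  apply: big1 => t _; case: eqP => // Hi.
  by have := run_diff Hj (ltn_ord t) Hi; rewrite zext_val => ->.
by rewrite lerDl sumr_ge0 // => k _; apply: Nj_ge0.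
Qed.

Lemma sum_w_N i (Pi : nat -> {ffun option X -> R}) T j :
  (forall t, (t < T)%N -> \sum_a Pi t a = 1) ->
  \sum_(z : {ffun 'I_T -> option X}) (\prod_(t : 'I_T) Pi t (z t)) * Nj i j z =
  \prod_(t : 'I_T) (if i t == j then Pi t None else 1).
Proof.
move=> H1.
under eq_bigr do rewrite /Nj -big_split /=.
rewrite -(bigA_distr_bigA (fun (t : 'I_T) c => Pi t c * (if i t == j then (c == None)%:R else 1))).
apply: eq_bigr => t _; case: ifP => _.
  by under eq_bigr do rewrite mulrC eq_sym; rewrite sum_ind.
by under eq_bigr do rewrite mulr1; rewrite H1.
Qed.


Lemma prod01 (f : nat -> R) a b :
  (forall t, (a <= t < b)%N -> 0 <= f t <= 1) ->
  0 <= \prod_(a <= t < b) f t <= 1.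
Proof.
move=> H; rewrite big_seq_cond; apply/andP; split.
  by apply: prodr_ge0 => t /andP[Ht _]; rewrite mem_index_iota in Ht; case/andP: (H t Ht).
by apply: prodr_ile1 => t /andP[Ht _]; rewrite mem_index_iota in Ht; apply: H.
Qed.

Lemma prod_bound (sigma : {perm 'I_L}) (i : nat -> 'I_L)
  (hi : forall (t : nat) (k : 'I_L), val k = (t %% L)%N -> i t = sigma k)
  (Pi : nat -> {ffun option X -> R}) (q : R) T j :
  q <= 1 -> (forall t, (t < T)%N -> 0 <= Pi t None <= q) ->
  \prod_(t : 'I_T) (if i t == j then Pi t None else 1) <= q ^+ (T %/ L).
Proof.
move=> q1 H.
pose f t := if i t == j then Pi t None else 1.
rewrite -(big_mkord xpredT f).
have f01 : forall t, (t < T)%N -> 0 <= f t <= 1.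
  move=> t Ht; rewrite /f; case: ifP => _; last by rewrite ler01 lexx.
  by case/andP: (H t Ht) => h1 h2; rewrite h1 (le_trans h2 q1).
have L0 : (0 < L)%N by case: (i 0) => k /=; case: L => // ; rewrite ltn0.
have hm : (T %/ L * L <= T)%N by apply: leq_trunc_div.
have claim : forall m, (m * L <= T)%N -> 0 <= \prod_(0 <= t < m * L) f t <= q ^+ m.
  elim=> [|m IH] hmL.
    by rewrite mul0n big_geq // expr0 ler01 lexx.
  have hmL' : (m * L <= T)%N by apply: leq_trans hmL; rewrite leq_mul2r leqnSn orbT.
  have /andP[A0 A1] := IH hmL'.
  rewrite mulSnr (big_cat_nat (n := m * L)) ?leq0n ?leq_addr //=.
  set k := (sigma^-1)%g j.
  have hk : (m * L <= m * L + k < m * L + L)%N by rewrite leq_addr ltn_add2l ltn_ord.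
  have Et : i (m * L + k)%N = j.
    by rewrite (hi _ k) ?permKV // modnMDl modn_small.
  case/andP: hk => hk1 hk2.
  rewrite [\prod_(m * L <= t < m * L + L) f t](big_cat_nat (n := (m * L + k)%N)) //=; last exact: ltnW.
  rewrite [\prod_(m * L + k <= t < m * L + L) f t](big_cat_nat (n := (m * L + k).+1)) //= big_nat1.
  have Hb : 0 <= f (m * L + k)%N <= q.
    rewrite /f Et eqxx; apply: H; apply: leq_trans hmL; by rewrite mulSnr.
  have /andP[a0 a1] : 0 <= \prod_(m * L <= t < m * L + k) f t <= 1.
    apply: prod01 => t /andP[h1 h2]; apply: f01.
    apply: leq_trans h2 _; apply: leq_trans (ltnW hk2) _; by rewrite -mulSnr.
  have /andP[c0 c1] : 0 <= \prod_((m * L + k).+1 <= t < m * L + L) f t <= 1.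
    apply: prod01 => t /andP[h1 h2]; apply: f01.
    by apply: leq_trans h2 _; rewrite -mulSnr.
  case/andP: Hb => b0 b1.
  rewrite exprSr; apply/andP; split; first by rewrite !mulr_ge0.
  have q0 : 0 <= q := le_trans b0 b1.
  have qm0 : 0 <= q ^+ m := exprn_ge0 _ q0.
  set A := \prod_(0 <= t < m * L) f t in A0 A1 *.
  set a := \prod_(m * L <= t < m * L + k) f t in a0 a1 *.
  set c := \prod_((m * L + k).+1 <= t < m * L + L) f t in c0 c1 *.
  set b := f (m * L + k)%N in b0 b1 *.
  have h1 : a * (b * c) <= q.
    apply: le_trans (ler_piMl _ a1) _; first by rewrite mulr_ge0.
    exact: le_trans (ler_piMr b0 c1) b1.
  by rewrite ler_pM // !mulr_ge0.
rewrite (big_cat_nat (n := (T %/ L * L)%N)) ?leq0n ?hm //=.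
have /andP[A0 A1] := claim _ hm.
have /andP[c0 c1] : 0 <= \prod_(T %/ L * L <= t < T) f t <= 1.
  by apply: prod01 => t /andP[_ h]; apply: f01.
set A := \prod_(0 <= t < T %/ L * L) f t in A0 A1 *.
set c := \prod_(T %/ L * L <= t < T) f t in c0 c1 *.
exact: le_trans (ler_piMr A0 c1) A1.
Qed.


Lemma sum_sum_mul (I J : finType) (a : I -> R) (b : J -> R) (C : R) :
  \sum_i \sum_j a i * b j * C = (\sum_i a i) * (\sum_j b j) * C.
Proof.
rewrite !big_distrl /=; apply: eq_bigr => x _.
rewrite big_distrr big_distrl /=; apply: eq_bigr => y _ /=; ring.
Qed.

Lemma TV_bound i (P : {ffun {ffun 'I_L -> X} -> R}) Pi (Q : {ffun X -> R}) T :
  is_dist P -> is_dist Q ->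
  (forall t, (t < T)%N -> is_dist (Pi t) /\ cond_on_X (Pi t) = Q) ->
  TV (lawXT i P Pi T) (prod_dist L Q) <=
  \sum_j \prod_(t : 'I_T) (if i t == j then Pi t None else 1).
Proof.
move=> [P0 P1] hQ H.
set pi := prod_dist L Q.
pose w (z : {ffun 'I_T -> option X}) := \prod_(t : 'I_T) Pi t (z t).
pose c (k : {ffun 'I_L -> X} * {ffun 'I_L -> X} * {ffun 'I_T -> option X}) :=
  P k.1.1 * pi k.1.2 * w k.2.
pose r1 (k : {ffun 'I_L -> X} * {ffun 'I_L -> X} * {ffun 'I_T -> option X}) :=
  run i (zext k.2) k.1.1 T.
pose r2 (k : {ffun 'I_L -> X} * {ffun 'I_L -> X} * {ffun 'I_T -> option X}) :=
  run i (zext k.2) k.1.2 T.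
have w0 : forall z, 0 <= w z.
  move=> z; apply: prodr_ge0 => t _; have [[h _] _] := H t (ltn_ord t); exact: h.
have pi0 : forall y, 0 <= pi y.
  move=> y; rewrite ffunE; apply: prodr_ge0 => t _; case: hQ => h _; exact: h.
have c0 : forall k, 0 <= c k by move=> k; rewrite /c !mulr_ge0.
apply: le_trans (tv_mix (c := c) (r1 := r1) (r2 := r2) c0 _) _.
  move=> x.
  have St : lawXT i pi Pi T = pi := stationary i hQ H.
  rewrite -{1}St !ffunE.
  rewrite sum_pair sum_pair /=.
  transitivity (\sum_x0 \sum_y0 \sum_z P x0 * pi y0 * w z * (run i (zext z) x0 T == x)%:R
     - \sum_x0 \sum_y0 \sum_z P x0 * pi y0 * w z * (run i (zext z) y0 T == x)%:R); last first.
    rewrite -sumrB; apply: eq_bigr => x0 _; rewrite -sumrB; apply: eq_bigr => y0 _.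
    rewrite -sumrB; apply: eq_bigr => z _; by rewrite /c /r1 /r2 /= mulrBr.
  have Epi : \sum_y0 pi y0 = 1 := prod_dist_sum hQ.
  congr (_ - _).
    symmetry; apply: eq_bigr => x0 _.
    transitivity ((\sum_y0 pi y0) * (P x0 * \sum_z w z * (run i (zext z) x0 T == x)%:R)); last first.
      by rewrite Epi mul1r.
    rewrite big_distrl /=; apply: eq_bigr => y0 _; rewrite !big_distrr /=.
    by apply: eq_bigr => z _ /=; rewrite /w; ring.
  symmetry; rewrite exchange_big /=; apply: eq_bigr => y0 _.
  transitivity ((\sum_x0 P x0) * (pi y0 * \sum_z w z * (run i (zext z) y0 T == x)%:R)); last first.
    by rewrite P1 mul1r.
  rewrite big_distrl /=; apply: eq_bigr => x0 _; rewrite !big_distrr /=.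
  by apply: eq_bigr => z _ /=; rewrite /w; ring.
apply: (@le_trans _ _ (\sum_k c k * \sum_j Nj i j k.2)).
  apply: ler_sum => k _; apply: ler_wpM2l => //; exact: ind_neq_le.
under eq_bigr do rewrite big_distrr.
rewrite exchange_big /=; apply: ler_sum => j _; rewrite le_eqVlt; apply/orP; left; apply/eqP.
rewrite sum_pair sum_pair /=.
transitivity (\sum_x0 \sum_y0 P x0 * pi y0 * (\sum_z w z * Nj i j z)).
  apply: eq_bigr => x0 _; apply: eq_bigr => y0 _; rewrite big_distrr.
  by apply: eq_bigr => z _ /=; rewrite /c /=; ring.
rewrite sum_sum_mul P1 (prod_dist_sum hQ) !mul1r sum_w_N // => t Ht.
by case: (H t Ht) => -[].
Qed.

End S.

Unset Implicit Arguments.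
Local Open Scope classical_set_scope.

Theorem lemma1 (R : realType) (X : finType) (L : nat) (sigma : {perm 'I_L})
  (i : nat -> 'I_L)
  (hi : forall (t : nat) (k : 'I_L), val k = (t %% L)%N -> i t = sigma k)
  (Pstar : {ffun {ffun 'I_L -> X} -> R}) (hPstar : is_dist Pstar)
  (Pi : nat -> {ffun option X -> R}) (Q : {ffun X -> R}) (hQ : is_dist Q)
  (eps : R) (heps : 0 < eps) :
  (forall T : nat,
     (forall t : nat, (t < T)%N ->
        [/\ is_dist (Pi t), cond_on_X (Pi t) = Q & Pi t None <= 1 - eps]) ->
     TV (lawXT i Pstar Pi T) (prod_dist L Q) <= L%:R * (1 - eps) ^+ (T %/ L))
  /\
  ((forall t : nat,
      [/\ is_dist (Pi t), cond_on_X (Pi t) = Q & Pi t None <= 1 - eps]) ->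
   (fun T : nat => TV (lawXT i Pstar Pi T) (prod_dist L Q)) @ \oo --> (0 : R)).
Proof.
have L0 : (0 < L)%N := leq_ltn_trans (leq0n _) (ltn_ord (i 0)).
have part1 : forall T : nat,
     (forall t : nat, (t < T)%N ->
        [/\ is_dist (Pi t), cond_on_X (Pi t) = Q & Pi t None <= 1 - eps]) ->
     TV (lawXT i Pstar Pi T) (prod_dist L Q) <= L%:R * (1 - eps) ^+ (T %/ L).
  move=> T HT.
  have HT' : forall t, (t < T)%N -> is_dist (Pi t) /\ cond_on_X (Pi t) = Q.
    by move=> t Ht; case: (HT t Ht).
  apply: le_trans (TV_bound i hPstar hQ HT') _.
  have Hb : forall j, \prod_(t : 'I_T) (if i t == j then Pi t None else 1)
      <= (1 - eps) ^+ (T %/ L).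
    move=> j; apply: (prod_bound hi) => [|t Ht]; first lra.
    by case: (HT t Ht) => -[h0 _] _ h; rewrite h0 h.
  apply: le_trans (ler_sum _ (fun j _ => Hb j)) _.
  by rewrite sumr_const card_ord mulr_natl.
split => // Hall.
have q0 : 0 <= 1 - eps.
  by case: (Hall 0) => -[h0 _] _ h; apply: le_trans (h0 None) h.
have q1 : `|1 - eps| < 1 by rewrite ger0_norm //; lra.
have Hdiv : (fun T => (T %/ L)%N) @ \oo --> \oo.
  apply/cvgnyPge => A.
  exists (A * L)%N => // T /= hT; rewrite -(mulnK A L0); exact: leq_div2r.
have Hq : (fun T => (1 - eps) ^+ (T %/ L)) @ \oo --> (0 : R).
  exact: (cvg_comp _ _ Hdiv (cvg_expr q1)).
have Hh : (fun T => L%:R * (1 - eps) ^+ (T %/ L)) @ \oo --> (0 : R).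
  by rewrite -(mulr0 (L%:R : R)); apply: cvgMl_tmp.
apply: (@squeeze_cvgr _ _ _ _ (fun=> 0) _ _ _ _ (cvg_cst _) Hh).
apply: nearW => T; apply/andP; split.
  rewrite /TV mulr_ge0 ?invr_ge0 ?ler0n //; apply: sumr_ge0 => x _; exact: normr_ge0.
by apply: part1 => t _; apply: Hall.
Qed.
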